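(* For $n>2$, the lattice generated by the vertices of $P(D_n)$ has index one in the lattice $\mathrm{aff}(P(D_n))\cap\mathbb{Z}^{n\times n}$; that is, every integer matrix $X$ that is a real linear combination of the differences $g-e$ ($g\in D_n$) is an integer linear combination of these differences.
   Context: Each $g\in S_n$ is identified with its $n\times n$ permutation matrix (entry $(i,j)$ is $1$ iff $g(i)=j$); $e$ is the identity; $P(G)=\mathrm{conv}\{g:g\in G\}$. $D_n\le S_n$ is generated by $r=(1\ 2\ \cdots\ n)$ and $f=(1\ n)(2\ n-1)\cdots(\lfloor\frac{n+1}{2}\rfloor\ \lceil\frac{n+1}{2}\rceil)$. *)

(* Defs.v *)
From HB Require Import structures.
From mathcomp Require Import all_boot all_order all_algebra all_fingroup.
From mathcomp Require Import reals.
Set Implicit Arguments. Unset Strict Implicit. Unset Printing Implicit Defensive.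
Import Order.TTheory GRing.Theory Num.Theory.

(* Indices are 0-based: the paper's point k (1 <= k <= n) is the ordinal k-1. *)

Definition rotD (n : nat) : {perm 'I_n} := perm (@ordS_inj n).

Definition flipD (n : nat) : {perm 'I_n} := perm (@rev_ord_inj n).

Definition dihedral (n : nat) : {set {perm 'I_n}} :=
  <<[set rotD n; flipD n]>>%g.

Definition permmx (R : pzRingType) (n : nat) (g : {perm 'I_n}) : 'M[R]_n :=
  \matrix_(i, j) (if g i == j then 1 else 0)%R.

(* Main.v *)
Require Import Defs.
From HB Require Import structures.
From mathcomp Require Import all_boot all_order all_algebra all_fingroup.
From mathcomp Require Import reals.
From mathcomp Require Import ring lra.
Import Order.TTheory GRing.Theory Num.Theory.
Local Open Scope ring_scope.

Lemma auxB (V : comNzRingType) (y : V) : y + 1 - (y - 1) = 1 + 1.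
Proof. ring. Qed.

Section Dih.
Variable m : nat.

Local Notation Z := 'I_m.+3.

Lemma rot_inj (d : Z) : injective (fun x : Z => x + d).
Proof. exact: addIr. Qed.
Lemma refl_inj (s : Z) : injective (fun x : Z => s - x).
Proof. by move=> x y /addrI/oppr_inj. Qed.
Definition rot (d : Z) : {perm Z} := perm (@rot_inj d).
Definition refl (s : Z) : {perm Z} := perm (@refl_inj s).
Lemma rotE d x : rot d x = x + d. Proof. by rewrite permE. Qed.
Lemma reflE s x : refl s x = s - x. Proof. by rewrite permE. Qed.

Lemma two_neq0 : (1 + 1 : Z) != 0.
Proof. by apply/eqP => /(congr1 val) /=; rewrite !modn_small. Qed.
Lemma one_neq0 : (1 : Z) != 0.
Proof. by []. Qed.

Lemma rotD_eq : @Defs.rotD m.+3 = rot 1.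
Proof.
apply/permP => x; rewrite rotE /Defs.rotD permE; apply: val_inj => /=.
by rewrite (@modn_small 1) // addn1.
Qed.

Lemma flipD_eq : @Defs.flipD m.+3 = refl (-1).
Proof.
apply/permP => x; rewrite reflE /Defs.flipD permE.
set y := rev_ord x.
have H : y + x + 1 = 0.
  apply: val_inj => /=; rewrite modnDml (@modn_small 1) // -addnA addn1 subnK //.
  by rewrite modnn.
move/eqP: H; rewrite -addrA addr_eq0 => /eqP ->.
by rewrite opprD addrC.
Qed.

Lemma rot_mul d e : (rot d * rot e = rot (d + e))%g.
Proof. by apply/permP => x; rewrite permM !rotE addrA. Qed.
Lemma rot_refl d t : (rot d * refl t = refl (t - d))%g.
Proof. by apply/permP => x; rewrite permM !rotE !reflE opprD addrA addrAC. Qed.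
Lemma refl_rot t d : (refl t * rot d = refl (t + d))%g.
Proof. by apply/permP => x; rewrite permM !rotE !reflE addrAC. Qed.
Lemma refl_refl t u : (refl t * refl u = rot (u - t))%g.
Proof. by apply/permP => x; rewrite permM !rotE !reflE opprB addrCA. Qed.
Lemma rot0 : rot 0 = 1%g.
Proof. by apply/permP => x; rewrite rotE perm1 addr0. Qed.

Definition DH : {set {perm Z}} := [set rot d | d : Z] :|: [set refl s | s : Z].

Lemma DH_group : group_set DH.
Proof.
apply/group_setP; split.
  by rewrite -rot0 inE; apply/orP; left; apply: imset_f.
move=> x y; rewrite !inE => /orP[] /imsetP[a _ ->] /orP[] /imsetP[b _ ->].
- by rewrite rot_mul; apply/orP; left; apply: imset_f.
- by rewrite rot_refl; apply/orP; right; apply: imset_f.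
- by rewrite refl_rot; apply/orP; right; apply: imset_f.
- by rewrite refl_refl; apply/orP; left; apply: imset_f.
Qed.

Lemma rotX k : ((rot 1%R) ^+ k = rot k%:R)%g.
Proof.
elim: k => [|k IH]; first by rewrite expg0 rot0.
by rewrite expgSr IH rot_mul natr1.
Qed.

Lemma dihedral_eq : dihedral m.+3 = DH.
Proof.
apply/eqP; rewrite eqEsubset; apply/andP; split.
  rewrite -(gen_set_id DH_group); apply: genS.
  apply/subsetP => x; rewrite !inE => /orP[] /eqP ->.
    by rewrite rotD_eq; apply/orP; left; apply: imset_f.
  by rewrite flipD_eq; apply/orP; right; apply: imset_f.
have hr : rot 1 \in dihedral m.+3.
  by rewrite -rotD_eq; apply: mem_gen; rewrite !inE eqxx.
have hf : refl (-1) \in dihedral m.+3.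
  by rewrite -flipD_eq; apply: mem_gen; rewrite !inE eqxx orbT.
apply/subsetP => x; rewrite !inE => /orP[] /imsetP[a _ ->].
  by rewrite -(natr_Zp a) -rotX; apply: groupX.
have -> : refl a = (refl (-1) * rot (a + 1))%g.
  by rewrite refl_rot addrC addrK.
by rewrite groupM // -(natr_Zp (a + 1)) -rotX; apply: groupX.
Qed.


Lemma two_ne0 : (1 + 1 : Z) != 0.
Proof. by apply/eqP => /(congr1 val) /=; rewrite !modn_small. Qed.

Lemma sum_dihedral (V : nmodType) (F : {perm Z} -> V) :
  \sum_(g in dihedral m.+3) F g = \sum_d F (rot d) + \sum_s F (refl s).
Proof.
rewrite dihedral_eq /DH.
rewrite (eq_bigl [predU [set rot d | d : Z] & [set refl s | s : Z]]); last by move=> g; rewrite !inE.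
rewrite bigU; last first.
  apply/pred0P => g /=; apply/negbTE/negP => /andP[/imsetP[a _ ->] /imsetP[b _ /permP E]].
  have E0 := E 0; have E1 := E 1; rewrite !rotE !reflE add0r subr0 in E0 E1.
  move: E1; rewrite E0 => /eqP; rewrite -subr_eq0 opprB addrA (addrAC 1) addrK.
  by rewrite (negbTE two_ne0).
rewrite !big_imset //.
- by move=> a b _ _ /permP E; have := E 0; rewrite !reflE !subr0.
- by move=> a b _ _ /permP E; have := E 0; rewrite !rotE !add0r.
Qed.


Lemma entry (S : comNzRingType) (c : {perm Z} -> S) i j :
  (\sum_(g in dihedral m.+3) c g *: (permmx S g - permmx S 1%g)) i j =
  \sum_d c (rot d) * ((i + d == j)%:R - (i == j)%:R)
  + \sum_s c (refl s) * ((s - i == j)%:R - (i == j)%:R).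
Proof.
rewrite sum_dihedral mxE !summxE; congr (_ + _); apply: eq_bigr => d _;
  rewrite !mxE /permmx perm1 ?rotE ?reflE; by case: (_ == _); case: (_ == _).
Qed.

Lemma rot_closed (S : comNzRingType) (a : Z -> S) i j :
  \sum_d a d * ((i + d == j)%:R - (i == j)%:R) = a (j - i) - (i == j)%:R * \sum_d a d.
Proof.
under eq_bigr do rewrite mulrBr.
rewrite sumrB mulr_sumr; congr (_ - _); last by apply: eq_bigr => d _; rewrite mulrC.
rewrite (bigD1 (j - i)) //= (addrC i (j - i)) subrK eqxx mulr1 big1 ?addr0 // => d hd.
have -> : (i + d == j) = false.
  by apply/negbTE; apply: contra hd => /eqP <-; rewrite (addrC i d) addrK.
by rewrite mulr0.
Qed.

Lemma refl_closed (S : comNzRingType) (b : Z -> S) i j :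
  \sum_s b s * ((s - i == j)%:R - (i == j)%:R) = b (i + j) - (i == j)%:R * \sum_s b s.
Proof.
under eq_bigr do rewrite mulrBr.
rewrite sumrB mulr_sumr; congr (_ - _); last by apply: eq_bigr => d _; rewrite mulrC.
rewrite (bigD1 (i + j)) //= (addrC i j) addrK eqxx mulr1 big1 ?addr0 // => d hd.
have -> : (d - i == j) = false.
  by apply/negbTE; apply: contra hd => /eqP <-; rewrite subrK.
by rewrite mulr0.
Qed.


Definition isint (R : realType) (x : R) := exists z : int, x = z%:~R.
Arguments isint {R}.
Lemma isintB (R : realType) (x y : R) : isint x -> isint y -> isint (x - y).
Proof. by move=> [u ->] [v ->]; exists (u - v); rewrite intrB. Qed.
Lemma isintD (R : realType) (x y : R) : isint x -> isint y -> isint (x + y).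
Proof. by move=> [u ->] [v ->]; exists (u + v); rewrite intrD. Qed.
Arguments isintB {R x y}.
Arguments isintD {R x y}.
Lemma isint0 (R : realType) : isint (0 : R).
Proof. by exists 0. Qed.

Lemma natr_n : ((m.+3)%:R : Z) = 0.
Proof. apply: val_inj; have := (@val_Zp_nat m.+3 isT m.+3); rewrite modnn; exact. Qed.

Lemma integrality (R : realType) (X : Z -> Z -> int) (a b : Z -> R) (T : R) :
  (forall i j, (X i j)%:~R = a (j - i) + b (i + j) - (i == j)%:R * T) ->
  b 0 = 0 -> (~~ odd m.+3 -> b 1 = 0) ->
  (forall d, d != 0 -> isint (a d)) /\ (forall s, isint (b s)).
Proof.
move=> H b0 b1.
have Hoff i j : i != j -> (X i j)%:~R = a (j - i) + b (i + j).
  by move=> /negbTE hij; rewrite H hij mul0r subr0.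
have step i j : i != j -> isint (b (i + j + (1 + 1)) - b (i + j)).
  move=> hij.
  have hij' : i + 1 != j + 1 by apply: contra hij => /eqP /addIr ->.
  have := Hoff _ _ hij'; have := Hoff _ _ hij.
  have -> : j + 1 - (i + 1) = j - i by rewrite opprD addrACA subrr addr0.
  have -> : i + 1 + (j + 1) = i + j + (1 + 1) by rewrite addrACA.
  move=> E1 E2.
  have -> : b (i + j + (1 + 1)) - b (i + j) = (X (i+1) (j+1))%:~R - (X i j)%:~R.
    by rewrite E1 E2; lra.
  by apply: isintB; [exists (X (i+1) (j+1)) | exists (X i j)].
have stepk k : isint (b (k.+2)%:R - b k%:R).
  have -> : (k.+2)%:R = (k%:R : Z) + (1 + 1) by rewrite -addn2 natrD.
  have hk := odd_double_half k; set y := k./2 in hk *.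
  have -> : (k%:R : Z) = y%:R + y%:R + (odd k : nat)%:R.
    by rewrite -{1}hk addnC -addnn !natrD.
  case: (odd k).
    have -> : ((y%:R + y%:R + (true : nat)%:R) : Z) = y%:R + (y%:R + 1) by rewrite addrA.
    apply: step; apply/eqP => /(congr1 (fun x => x - y%:R)).
    by rewrite subrr addrAC subrr add0r => /eqP; rewrite eq_sym (negbTE one_neq0).
  have -> : ((y%:R + y%:R + (false : nat)%:R) : Z) = (y%:R - 1) + (y%:R + 1).
    by rewrite addr0 addrACA addNr addr0.
  apply: step; apply/eqP => /(congr1 (fun x => y%:R + 1 - x)).
  rewrite (subrr (y%:R + 1)) auxB => /eqP.
  by rewrite (negbTE two_ne0).
have hev y : isint (b (y.*2)%:R).
  elim: y => [|y IH]; first by rewrite b0; exact: isint0.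
  have := isintD (stepk y.*2) IH; rewrite subrK.
  by rewrite doubleS.
have hod y : isint (b (y.*2.+1)%:R).
  elim: y => [|y IH].
    case ho: (odd m.+3).
      have -> : ((0.*2.+1)%:R : Z) = ((m.+4)./2.*2)%:R.
        have E : ((m.+4)./2.*2) = m.+4.
          by have := odd_double_half m.+4; rewrite (oddS m.+3) ho /= add0n.
        rewrite E (_ : m.+4 = m.+3 + 1)%N; last by rewrite addn1.
        by rewrite natrD natr_n add0r.
      exact: hev.
    rewrite (_ : ((0.*2.+1)%:R : Z) = 1) // (b1 (negbT ho)); exact: isint0.
  have := isintD (stepk y.*2.+1) IH; rewrite subrK.
  by rewrite doubleS.
have hb s : isint (b s).
  rewrite -(natr_Zp s) -(odd_double_half s); case: (odd s) => /=.
    by rewrite add1n; apply: hod.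
  by rewrite add0n; apply: hev.
split => // d hd.
have := Hoff 0 d; rewrite eq_sym hd subr0 add0r => /(_ isT) E.
have -> : a d = (X 0 d)%:~R - b d by rewrite E addrK.
by apply: isintB => //; exists (X 0 d).
Qed.


Lemma parity_eq (i j : Z) : ~~ odd m.+3 -> odd (nat_of_ord (j - i : Z)) = odd (nat_of_ord (i + j : Z)).
Proof.
move=> hn; have hn' : odd m.+3 = false by apply: negbTE.
have E1 : nat_of_ord (j - i) = ((j + (m.+3 - i) %% m.+3) %% m.+3)%N by [].
have E2 : nat_of_ord (i + j) = ((i + j) %% m.+3)%N by [].
rewrite E1 E2.
rewrite !odd_mod // !oddD !odd_mod // oddB ?(ltnW (ltn_ord i)) // hn'.
by rewrite /= addbC.
Qed.

Definition ee (R : realType) (x : Z) : R := if odd x then -1 else 1.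

Lemma shift (R : realType) (a b : Z -> R) : exists a' b' : Z -> R,
  (forall i j, a (j - i) + b (i + j) - (i == j)%:R * (\sum_d a d + \sum_s b s)
     = a' (j - i) + b' (i + j) - (i == j)%:R * (\sum_d a' d + \sum_s b' s))
  /\ b' 0 = 0 /\ (~~ odd m.+3 -> b' 1 = 0).
Proof.
case ho : (odd m.+3).
  exists (fun d => a d + b 0), (fun s => b s - b 0); split => // [i j|].
    rewrite big_split sumrB /=; ring.
  by split => //; rewrite subrr.
pose t := (b 0 + b 1) / 2; pose u := (b 0 - b 1) / 2.
pose f := fun x : Z => t + u * ee R x.
exists (fun d => a d + f d), (fun s => b s - f s); split => [i j|].
  rewrite big_split sumrB /=.
  have -> : f (j - i) = f (i + j) by rewrite /f /ee parity_eq ?ho.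
  ring.
split.
  rewrite /f /ee /t /u /=.
  lra.
move=> _; rewrite /f /ee /t /u /=.
lra.
Qed.

End Dih.

Theorem proposition4 (R : realType) (n : nat) (hn : (2 < n)%N) (X : 'M[int]_n) :
  (exists c : {perm 'I_n} -> R,
     map_mx (fun z : int => z%:~R) X =
     \sum_(g in dihedral n) c g *: (permmx R g - permmx R 1%g)) ->
  exists k : {perm 'I_n} -> int,
     X = \sum_(g in dihedral n) k g *: (permmx int g - permmx int 1%g).
Proof.
case: n hn X => [|[|[|m]]] // _ X [c Hc].
pose a d := c (rot m d); pose b s := c (refl m s).
have HX i j : (X i j)%:~R = a (j - i) + b (i + j) - (i == j)%:R * (\sum_d a d + \sum_s b s).
  have := congr1 (fun M : 'M[R]_(m.+3) => M i j) Hc; rewrite /= mxE entry rot_closed refl_closed => ->.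
  rewrite /a /b; ring.
have [a' [b' [Hs [b0 b1]]]] := @shift m R a b.
have HX' i j : (X i j)%:~R = a' (j - i) + b' (i + j) - (i == j)%:R * (\sum_d a' d + \sum_s b' s).
  by rewrite HX Hs.
have [ia ib] := @integrality m R X a' b' _ HX' b0 b1.
pose ka d := Num.floor (a' d); pose kb s := Num.floor (b' s).
have kaE d : d != 0 -> (ka d)%:~R = a' d.
  by move=> /ia [z E]; rewrite /ka E intrKfloor.
have kbE s : (kb s)%:~R = b' s.
  by have [z E] := ib s; rewrite /kb E intrKfloor.
exists (fun g => if g 1 == g 0 + 1 then ka (g 0) else kb (g 0)).
apply/matrixP => i j; apply: (@intr_inj R).
rewrite entry HX'.
have -> : a' (j - i) + b' (i + j) - (i == j)%:R * (\sum_d a' d + \sum_s b' s)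
  = (a' (j - i) - (i == j)%:R * \sum_d a' d) + (b' (i + j) - (i == j)%:R * \sum_s b' s).
  by ring.
rewrite -(@rot_closed m _ a') -(@refl_closed m _ b') rmorphD !rmorph_sum /=.
congr (_ + _); apply: eq_bigr => d _; rewrite rmorphM rmorphB /= !rmorph_nat.
  rewrite !rotE add0r (addrC 1 d) eqxx.
  have [->|hd] := eqVneq d 0; first by rewrite addr0 subrr !mulr0.
  by rewrite kaE.
rewrite !reflE subr0.
have -> : (d - 1 == d + 1) = false.
  apply/negbTE/eqP => /(congr1 (fun x => d + 1 - x)).
  rewrite auxB (subrr (d + 1)) => /eqP.
  by rewrite (negbTE (two_ne0 m)).
by rewrite kbE.
Qed.
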